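(* Let $(R,\mathfrak{m})$ be a local ring and $\mathcal{X}$ a resolving subcategory of $\operatorname{mod} R$. If $\operatorname{radius}\mathcal{X}<\infty$, then $\sup_{X\in\mathcal{X}}\{\ell\ell(\Gamma_\mathfrak{m}(X))\}<\infty$.
   Context: All modules are finitely generated; $\operatorname{mod} R$ is the category of finitely generated $R$-modules; subcategories are full and closed under isomorphism. A subcategory is resolving if it contains the projective modules and is closed under direct summands, extensions, and kernels of epimorphisms. $\Gamma_\mathfrak{m}(X)$ is the submodule of elements of $X$ annihilated by some power of $\mathfrak{m}$; $\ell\ell(N)$ (Loewy length) is the infimum of $n\ge0$ with $\mathfrak{m}^nN=0$. Radius: $\Omega^iX$ is the $i$-th syzygy in the minimal free resolution, $\Omega^0X=X$; $[\mathcal{X}]$ is the additive closure (direct summands of finite direct sums) of the subcategory consisting of $R$ and all $\Omega^iX$, $i\ge0$, $X\in\mathcal{X}$; $\mathcal{X}\circ\mathcal{Y}$ consists of modules $M$ with an exact sequence $0\to X\to M\to Y\to0$, $X\in\mathcal{X}$, $Y\in\mathcal{Y}$; $[C]_1=[C]$, $[C]_r=[[C]_{r-1}\circ[C]]$; the radius of $\mathcal{X}$ is the infimum of $n\ge0$ with $\mathcal{X}\subseteq[C]_{n+1}$ for some $C\in\operatorname{mod} R$. *)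

(* Defs.v *)
From HB Require Import structures.
From mathcomp Require Import all_boot all_order all_algebra.
Set Implicit Arguments. Unset Strict Implicit. Unset Printing Implicit Defensive.
Import GRing.Theory.
Local Open Scope ring_scope.

Definition is_ideal (R : comUnitRingType) (I : R -> Prop) : Prop :=
  I 0 /\ (forall x y, I x -> I y -> I (x + y)) /\ (forall r x, I x -> I (r * x)).

Definition fg_ideal (R : comUnitRingType) (I : R -> Prop) : Prop :=
  exists s : seq R, forall x, I x <->
    exists c : 'I_(size s) -> R, x = \sum_(j < size s) c j * s`_j.

Definition noetherian (R : comUnitRingType) : Prop :=
  forall I : R -> Prop, is_ideal I -> fg_ideal I.

(* local ring: the non-units form an ideal (the unique maximal ideal m) *)
Definition local_ring (R : comUnitRingType) : Prop :=
  forall x y : R, x \isn't a GRing.unit -> y \isn't a GRing.unit ->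
    (x + y) \isn't a GRing.unit.

Definition maxideal (R : comUnitRingType) (x : R) : Prop := x \isn't a GRing.unit.

Definition mpow (R : comUnitRingType) (k : nat) (r : R) : Prop :=
  exists (l : nat) (c : 'I_l -> R) (a : 'I_l -> 'I_k -> R),
    (forall i j, maxideal (a i j)) /\ r = \sum_(i < l) c i * \prod_(j < k) a i j.

Definition lin (R : comUnitRingType) (M N : lmodType R) (f : M -> N) : Prop :=
  forall (a : R) (x y : M), f (a *: x + y) = a *: f x + f y.

Definition surj (A B : Type) (f : A -> B) : Prop := forall y, exists x, f x = y.

Definition fgmod (R : comUnitRingType) (M : lmodType R) : Prop :=
  exists (n : nat) (p : 'rV[R]_n -> M), lin p /\ surj p.

Definition mingens (R : comUnitRingType) (M : lmodType R) (n : nat) : Prop :=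
  (exists p : 'rV[R]_n -> M, lin p /\ surj p) /\
  (forall m, (exists p : 'rV[R]_m -> M, lin p /\ surj p) -> (n <= m)%N).

Definition isomod (R : comUnitRingType) (M N : lmodType R) : Prop :=
  exists f : M -> N, lin f /\ bijective f.

Definition summand (R : comUnitRingType) (N M : lmodType R) : Prop :=
  exists (s : N -> M) (r : M -> N), lin s /\ lin r /\ cancel s r.

Definition ses (R : comUnitRingType) (A B C : lmodType R) : Prop :=
  exists (i : A -> B) (p : B -> C), lin i /\ lin p /\ injective i /\ surj p /\
    (forall y, p y = 0 <-> exists x, i x = y).

Definition projmod (R : comUnitRingType) (P : lmodType R) : Prop :=
  fgmod P /\ exists n, summand P 'rV[R]_n.

Definition subcat (R : comUnitRingType) (X : lmodType R -> Prop) : Prop :=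
  (forall M, X M -> fgmod M) /\ (forall M N, isomod M N -> X M -> X N).

Definition resolving (R : comUnitRingType) (X : lmodType R -> Prop) : Prop :=
  subcat X /\
  (forall P, projmod P -> X P) /\
  (forall M N, X M -> summand N M -> X N) /\
  (forall A B C, ses A B C -> X A -> X C -> X B) /\
  (forall A B C, ses A B C -> X B -> X C -> X A).

(* N is (isomorphic to) the first syzygy of M in its minimal free resolution:
   0 -> N -> R^(mu M) -> M -> 0 *)
Definition syz (R : comUnitRingType) (M N : lmodType R) : Prop :=
  exists n, mingens M n /\ ses N 'rV[R]_n M.

Fixpoint syzN (R : comUnitRingType) (k : nat) (M N : lmodType R) {struct k} : Prop :=
  match k with
  | 0 => isomod M N
  | k'.+1 => exists K : lmodType R, syzN k' M K /\ syz K N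
  end.

(* M is a direct summand of a finite direct sum of modules satisfying G
   (biproduct written out via its structure maps) *)
Definition addcl (R : comUnitRingType) (G : lmodType R -> Prop) (M : lmodType R) : Prop :=
  fgmod M /\
  exists (k : nat) (Y : 'I_k -> lmodType R)
         (s : forall j, M -> Y j) (r : forall j, Y j -> M),
    (forall j, G (Y j) /\ lin (s j) /\ lin (r j)) /\
    (forall x : M, \sum_(j < k) r j (s j x) = x).

(* [X]: additive closure of R and all Omega^i Z, Z in X *)
Definition brk (R : comUnitRingType) (X : lmodType R -> Prop) : lmodType R -> Prop :=
  addcl (fun Y => isomod Y 'rV[R]_1 \/ exists (Z : lmodType R) (i : nat), X Z /\ syzN i Z Y).

Definition circ (R : comUnitRingType) (X Y : lmodType R -> Prop) (M : lmodType R) : Prop :=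
  exists A B : lmodType R, X A /\ Y B /\ ses A M B.

Definition brk1 (R : comUnitRingType) (C : lmodType R) : lmodType R -> Prop :=
  brk (fun Z => isomod C Z).

(* ballS C r = [C]_(r+1) *)
Fixpoint ballS (R : comUnitRingType) (C : lmodType R) (r : nat) {struct r} : lmodType R -> Prop :=
  match r with
  | 0 => brk1 C
  | r'.+1 => brk (circ (ballS C r') (brk1 C))
  end.

Definition radius_finite (R : comUnitRingType) (X : lmodType R -> Prop) : Prop :=
  exists (n : nat) (C : lmodType R), fgmod C /\ forall M, X M -> ballS C n M.

(* ll(Gamma_m(M)) <= n, i.e. m^n Gamma_m(M) = 0 *)
Definition ll_gamma_le (R : comUnitRingType) (M : lmodType R) (n : nat) : Prop :=
  forall x : M, (exists k, forall r, mpow k r -> r *: x = 0) ->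
    forall r, mpow n r -> r *: x = 0.

(* Main.v *)
From Stdlib Require Import IndefiniteDescription.
Require Import Defs.
From HB Require Import structures.
From mathcomp Require Import all_boot all_order all_algebra.
Set Implicit Arguments. Unset Strict Implicit. Unset Printing Implicit Defensive.
Import GRing.Theory.
Local Open Scope ring_scope.

Section Aux.
Variable R : comUnitRingType.

Lemma mpow_mul k (s r : R) : mpow k r -> mpow k (s * r).
Proof.
case=> l [c [a [Ha ->]]]; exists l, (fun i => s * c i), a; split => //.
by rewrite mulr_sumr; apply: eq_bigr => i _; rewrite mulrA.
Qed.

Lemma mpow_S k (r : R) : mpow k.+1 r -> mpow k r.
Proof.
case=> l [c [a [Ha ->]]].
exists l, (fun i => c i * a i ord_max), (fun i j => a i (widen_ord (leqnSn k) j)).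
split => // ; apply: eq_bigr => i _; rewrite big_ord_recr /= mulrA.
by rewrite [c i * _ * _]mulrAC.
Qed.

Lemma mpow_mono k n (r : R) : (k <= n)%N -> mpow n r -> mpow k r.
Proof.
move=> /subnK <-; elim: (n - k)%N => //= d IH H; apply: IH; exact: mpow_S.
Qed.

Lemma mpow_split a b (t : R) : mpow (a + b) t ->
  exists l (w v : 'I_l -> R), (forall i, mpow a (w i)) /\ (forall i, mpow b (v i))
    /\ t = \sum_(i < l) w i * v i.
Proof.
case=> l [c [x [Hx ->]]].
exists l, (fun i => c i * \prod_(j < a) x i (lshift b j)),
  (fun i => \prod_(j < b) x i (rshift a j)); split; [|split].
- move=> i; exists 1%N, (fun _ => c i), (fun _ j => x i (lshift b j)); split => //.
  by rewrite big_ord1.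
- move=> i; exists 1%N, (fun _ => 1), (fun _ j => x i (rshift a j)); split => //.
  by rewrite big_ord1 mul1r.
- by apply: eq_bigr => i _; rewrite big_split_ord /= mulrA.
Qed.

Variables M N : lmodType R.

Lemma lin0 (f : M -> N) : lin f -> f 0 = 0.
Proof.
move=> Hf; have := Hf 1 0 0; rewrite !scale1r !addr0 => H.
by apply: (@addrI _ (f 0)); rewrite addr0 -H.
Qed.

Lemma linZ (f : M -> N) a x : lin f -> f (a *: x) = a *: f x.
Proof. by move=> Hf; have := Hf a x 0; rewrite (lin0 Hf) addr0 [_ + 0]addr0. Qed.

Lemma linD (f : M -> N) x y : lin f -> f (x + y) = f x + f y.
Proof. by move=> Hf; have := Hf 1 x y; rewrite !scale1r. Qed.

Lemma linsum (f : M -> N) k (c : 'I_k -> R) (v : 'I_k -> M) : lin f ->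
  f (\sum_(j < k) c j *: v j) = \sum_(j < k) c j *: f (v j).
Proof.
move=> Hf; apply: (big_rec2 (fun u w => f u = w)); first exact: lin0.
by move=> i y1 y2 _ <-; rewrite Hf.
Qed.

End Aux.

Definition submod (R : comUnitRingType) (M : lmodType R) (S : M -> Prop) :=
  S 0 /\ forall a x y, S x -> S y -> S (a *: x + y).

Definition fgsub (R : comUnitRingType) (M : lmodType R) (S : M -> Prop) :=
  exists k (gen : 'I_k -> M), (forall j, S (gen j)) /\
    forall x, S x -> exists c : 'I_k -> R, x = \sum_(j < k) c j *: gen j.

Definition noethmod (R : comUnitRingType) (M : lmodType R) :=
  forall S : M -> Prop, submod S -> fgsub S.

Section Noeth.
Variable R : comUnitRingType.

Lemma submod_sum (M : lmodType R) (S : M -> Prop) k (c : 'I_k -> R) (v : 'I_k -> M) :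
  submod S -> (forall j, S (v j)) -> S (\sum_(j < k) c j *: v j).
Proof.
case=> S0 SD Hv; apply: (big_ind S) => //.
- by move=> x y Sx Sy; rewrite -[x]scale1r; apply: SD.
- by move=> i _; rewrite -[_ *: _]addr0; apply: SD.
Qed.

Lemma noeth_base : noetherian R -> noethmod R^o.
Proof.
move=> hN S [S0 SD].
have hI : is_ideal (S : R -> Prop).
  split => //; split.
  - by move=> x y Sx Sy; have := SD 1 x y Sx Sy; rewrite scale1r.
  - by move=> r x Sx; have := SD r x 0 Sx S0; rewrite addr0.
have [s Hs] := hN _ hI.
exists (size s), (fun j => s`_j); split.
- move=> j; apply/Hs; exists (fun i => (i == j)%:R).
  rewrite (bigD1 j) //= eqxx mul1r big1 ?addr0 // => i /negbTE ->.
  by rewrite mul0r.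
- by move=> x /Hs.
Qed.

Lemma noeth_ext (A B C : lmodType R) (g : A -> B) (f : B -> C) :
  lin g -> lin f -> (forall y, f y = 0 -> exists x, g x = y) ->
  noethmod A -> noethmod C -> noethmod B.
Proof.
move=> Hg Hf Hex nA nC S [S0 SD].
have [kC [genC [HgC HrC]]] : fgsub (fun c => exists b, S b /\ f b = c).
  apply: nC; split; first by exists 0; rewrite (lin0 Hf).
  move=> a _ _ [bx [Sx <-]] [by_ [Sy <-]]; exists (a *: bx + by_); split.
    exact: SD.
  by rewrite Hf.
have [kA [genA [HgA HrA]]] : fgsub (fun a => S (g a)).
  apply: nA; split; first by rewrite (lin0 Hg).
  by move=> a x y Sx Sy; rewrite Hg; apply: SD.
have [bj Hbj] := functional_choice _ HgC.
pose gen (i : 'I_(kC + kA)) := match split i with inl j => bj j | inr j => g (genA j) end.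
exists (kC + kA)%N, gen; split.
  by move=> i; rewrite /gen; case: (split i) => j; [case: (Hbj j) | apply: HgA].
move=> x Sx.
have [cC HcC] := HrC (f x) (ex_intro _ x (conj Sx erefl)).
set x' := x - \sum_(j < kC) cC j *: bj j.
have Sx' : S x'.
  rewrite /x' addrC -scaleN1r; apply: (SD) => //.
  by apply: submod_sum => [|j]; [exact: (conj S0 SD) | case: (Hbj j)].
have fx' : f x' = 0.
  rewrite /x' -scaleN1r addrC linD // linZ // linsum // HcC.
  rewrite scaleN1r addrC; apply/eqP; rewrite subr_eq0; apply/eqP.
  by apply: eq_bigr => j _; case: (Hbj j) => _ ->.
have [a Ha] := Hex _ fx'.
have : S (g a) by rewrite Ha.
move=> /HrA [cA HcA].
exists (fun i => match split i with inl j => cC j | inr j => cA j end).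
rewrite big_split_ord /= /gen.
have -> : x = \sum_(j < kC) cC j *: bj j + x' by rewrite /x' addrC subrK.
congr (_ + _).
  by apply: eq_bigr => j _; rewrite -[lshift _ _]/(unsplit (inl j)) unsplitK.
rewrite -Ha HcA linsum //.
by apply: eq_bigr => j _; rewrite -[rshift _ _]/(unsplit (inr j)) unsplitK.
Qed.

Lemma noeth_rV n : noetherian R -> noethmod 'rV[R]_n.
Proof.
move=> hN; elim: n => [|n IH].
  move=> S [S0 _]; exists 0%N, (fun j => 0); split; first by move=> [].
  by move=> x _; exists (fun _ => 0); rewrite big_ord0 thinmx0.
apply: (@noeth_ext R^o _ _ (fun a : R^o => a *: delta_mx 0 0)
   (fun v : 'rV[R]_n.+1 => \row_j v 0 (lift ord0 j))).
- by move=> a x y; rewrite /= scalerDl scalerA.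
- by move=> a x y; apply/rowP => j; rewrite !mxE.
- move=> v /rowP Hv; exists (v 0 0); apply/rowP => j; rewrite !mxE.
  case: (unliftP ord0 j) => [j' ->|->]; last by rewrite eqxx mulr1.
  have := Hv j'; rewrite !mxE => ->; by rewrite mulr0.
- exact: noeth_base.
- exact: IH.
Qed.

End Noeth.

Section Bounds.
Variable R : comUnitRingType.

Lemma ll_mono (M : lmodType R) b b' : ll_gamma_le M b -> (b <= b')%N -> ll_gamma_le M b'.
Proof. by move=> H le x tx r /(mpow_mono le); apply: H. Qed.

Lemma bound_of (N M : lmodType R) (p : N -> M) : lin p -> surj p -> noethmod N ->
  exists b, ll_gamma_le M b.
Proof.
move=> Hp sp nN.
pose S y := exists k, forall r, mpow k r -> r *: p y = 0.
have [k [gen [Hg Hr]]] : fgsub S.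
  apply: nN; split.
    by exists 0%N => r _; rewrite (lin0 Hp) scaler0.
  move=> a x y [kx Hx] [ky Hy]; exists (kx + ky)%N => r Hr.
  rewrite Hp scalerDr scalerA mulrC -scalerA Hx ?scaler0 ?add0r.
    by apply: Hy; apply: mpow_mono Hr; apply: leq_addl.
  by apply: mpow_mono Hr; apply: leq_addr.
have [kj Hkj] := functional_choice _ Hg.
exists (\max_(j < k) kj j) => x tx r Hrr.
case: (sp x) => y Hy; subst x.
have Sy : S y := tx.
have [c ->] := Hr y Sy.
rewrite linsum // scaler_sumr big1 // => j _.
by rewrite scalerA mulrC -scalerA Hkj ?scaler0 //; apply: mpow_mono Hrr; apply: leq_bigmax.
Qed.

Lemma ll_inj (M N : lmodType R) (f : M -> N) b : lin f -> injective f ->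
  ll_gamma_le N b -> ll_gamma_le M b.
Proof.
move=> Hf If H x [k Hk] r Hr; apply: If; rewrite (lin0 Hf) linZ //.
apply: H Hr; exists k => s Hs; by rewrite -linZ // Hk // (lin0 Hf).
Qed.

Lemma ll_iso (M N : lmodType R) b : isomod M N -> ll_gamma_le M b -> ll_gamma_le N b.
Proof.
case=> f [Hf [g fK gK]]; apply: (@ll_inj _ _ g); last exact: can_inj gK.
move=> a x y; apply: (can_inj fK); by rewrite Hf !gK.
Qed.

Lemma ll_rV n b : ll_gamma_le (R^o) b -> ll_gamma_le 'rV[R]_n b.
Proof.
move=> H x [k Hk] r Hr; apply/rowP => j; rewrite !mxE.
apply: (H (x 0 j)) Hr; exists k => s Hs.
by have := congr1 (fun v : 'rV[R]_n => v 0 j) (Hk s Hs); rewrite !mxE.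
Qed.

Lemma syz_inj k (Z Y : lmodType R) : syzN k.+1 Z Y ->
  exists n (i : Y -> 'rV[R]_n), lin i /\ injective i.
Proof.
case=> K [_ [n [_ [i [p [Hi [_ [Ii _]]]]]]]]; by exists n, i.
Qed.

Definition Unif (G : lmodType R -> Prop) b := forall Y, G Y -> ll_gamma_le Y b.

Lemma unif_addcl G b : Unif G b -> Unif (addcl G) b.
Proof.
move=> HG M [_ [k [Y [s [r [Hj Hsum]]]]]] x [k0 Hk0] t Ht.
rewrite -(Hsum x) scaler_sumr big1 // => j _.
case: (Hj j) => GY [Hs Hrj].
rewrite -(linZ _ _ Hrj) (HG _ GY (s j x)) ?(lin0 Hrj) //.
by exists k0 => u Hu; rewrite -linZ // Hk0 // (lin0 Hs).
Qed.

Lemma unif_circ X1 Y1 b1 b2 : Unif X1 b1 -> Unif Y1 b2 -> Unif (circ X1 Y1) (b1 + b2).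
Proof.
move=> H1 H2 M [A [B [XA [YB [i [p [Hi [Hp [Ii [_ Hex]]]]]]]]]] x [k Hk] t Ht.
have [l [w [v [Hw [Hv ->]]]]] := mpow_split Ht.
rewrite scaler_suml big1 // => j _.
have : p (v j *: x) = 0.
  rewrite linZ //; apply: (H2 _ YB) (Hv j); exists k => s Hs.
  by rewrite -linZ // Hk // (lin0 Hp).
move=> /Hex [a Ha].
have ta : exists k, forall r, mpow k r -> r *: a = 0.
  exists k => s Hs; apply: Ii; rewrite linZ // Ha (lin0 Hi) scalerA Hk //.
  by rewrite mulrC; apply: mpow_mul.
by rewrite -scalerA -Ha -linZ // (H1 _ XA a ta _ (Hw j)) (lin0 Hi).
Qed.

Lemma unif_brk X' b bF : ll_gamma_le (R^o) bF -> Unif X' b ->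
  Unif (brk X') (maxn b bF).
Proof.
move=> HF HX; apply: unif_addcl => Y [[f [Hf [g fK _]]]|[Z [[|k] [XZ HZ]]]].
- apply: ll_mono (leq_maxr _ _); apply: (@ll_inj _ _ f) => //; first exact: can_inj fK.
  exact: ll_rV.
- apply: ll_mono (leq_maxl _ _); exact: ll_iso HZ (HX _ XZ).
- have [n [i [Hi Ii]]] := syz_inj HZ.
  apply: ll_mono (leq_maxr _ _); apply: (@ll_inj _ _ i) => //; exact: ll_rV.
Qed.

End Bounds.

Theorem proposition4p3 (R : comUnitRingType) (hN : noetherian R) (hL : local_ring R)
  (X : lmodType R -> Prop) (hX : resolving X) (hrad : radius_finite X) :
  exists n : nat, forall M : lmodType R, X M -> ll_gamma_le M n.
Proof.
have [bF HF] : exists b, ll_gamma_le (R^o) b.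
  apply: (@bound_of _ _ _ id) => //; last exact: noeth_base.
  by move=> y; exists y.
case: hrad => n [C [[m [p [Hp sp]]] HC]].
have [bC HbC] := bound_of Hp sp (@noeth_rV _ m hN).
have H1 : Unif (brk1 C) (maxn bC bF).
  by apply: unif_brk => // Y HY; exact: ll_iso HY HbC.
have : exists b, Unif (ballS C n) b.
  elim: n {HC} => [|r [b Hb]]; first by exists (maxn bC bF).
  exists (maxn (b + maxn bC bF) bF); apply: unif_brk => //; exact: unif_circ.
case=> b Hb; exists b => M /HC; exact: Hb.
Qed.
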